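(* For every tree metric and every $\alpha>0$, the greedy-routing network creation game with edge price $\alpha$ is weakly acyclic under best responses: from every strategy profile there is a finite sequence of profiles, each obtained from the previous one by a single agent switching to a best response, that ends in a Nash equilibrium.
   Context: A tree metric on a finite set $\mathcal{P}$ is given by a spanning tree $T$ on $\mathcal{P}$ with positive edge weights, $d(x,y)=d_T(x,y)$ being the weight of the unique $x$–$y$ path in $T$. Game: agents are the points of $\mathcal{P}$; agent $u$'s strategy is $S_u\subseteq\mathcal{P}\setminus\{u\}$; a profile $\mathbf{s}$ defines the directed network with arcs $(u,v)$, $v\in S_u$, of length $d(u,v)$. A greedy path from $u$ to $v$ is a directed path $u=x_1,\dots,x_j=v$ of arcs with $d(x_i,v)>d(x_{i+1},v)$ for all $i$. $\mathrm{stretch}(u,v)$ is the minimum length of a greedy path from $u$ to $v$ divided by $d(u,v)$, or a fixed sufficiently large penalty constant $Z$ if none exists. Cost: $c_u(\mathbf{s})=\sum_{v\ne u}\mathrm{stretch}(u,v)+\alpha|S_u|$. A best response of $u$ to $\mathbf{s}$ is a strategy minimizing $c_u(\cdot,\mathbf{s}_{-u})$; a Nash equilibrium is a profile where every agent plays a best response. *)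

(* Defs.v *)
From mathcomp Require Import all_boot all_order all_algebra.
Set Implicit Arguments. Unset Strict Implicit. Unset Printing Implicit Defensive.
Import Order.TTheory GRing.Theory Num.Theory.
Local Open Scope ring_scope.

Section Game.
Variables (R : realFieldType) (T : finType).

Fixpoint wlen (w : T -> T -> R) (x : T) (p : seq T) : R :=
  match p with
  | [::] => 0
  | y :: p' => w x y + wlen w y p'
  end.

Definition is_tree (E : rel T) : Prop :=
  forall x y : T, exists! p : seq T,
    [/\ path E x p, last x p = y & uniq (x :: p)].

Definition is_tree_metric (E : rel T) (w d : T -> T -> R) : Prop :=
  forall (x y : T) (p : seq T),
    path E x p -> last x p = y -> uniq (x :: p) -> d x y = wlen w x p.

(* A strategy profile: agent u buys arcs to the points in s u. *)
Definition profile := T -> {set T}.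

Definition valid_profile (s : profile) : Prop := forall u, u \notin s u.

Definition upd (s : profile) (u : T) (S : {set T}) : profile :=
  fun x => if x == u then S else s x.

Definition greedy (d : T -> T -> R) (s : profile) (u v : T) (p : seq T) : bool :=
  path (fun a b => (b \in s a) && (d b v < d a v)) u p && (last u p == v).

Fixpoint all_seqs (n : nat) : seq (seq T) :=
  match n with
  | 0 => [:: [::]]
  | n'.+1 => [seq x :: p | x <- enum T, p <- all_seqs n']
  end.

(* all sequences of length < #|T|; every greedy path visits distinct points
   (distance to v strictly decreases), so every greedy path is among them. *)
Definition cand_seqs : seq (seq T) := flatten [seq all_seqs k | k <- iota 0 #|T|].

Definition greedy_lengths (d : T -> T -> R) (s : profile) (u v : T) : seq R :=
  [seq wlen d u p | p <- cand_seqs & greedy d s u v p].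

Definition stretch (d : T -> T -> R) (Z : R) (s : profile) (u v : T) : R :=
  match greedy_lengths d s u v with
  | [::] => Z
  | l0 :: ls => (\big[Num.min/l0]_(l <- ls) l) / d u v
  end.

Definition cost (d : T -> T -> R) (Z alpha : R) (s : profile) (u : T) : R :=
  \sum_(v | v != u) stretch d Z s u v + alpha * #|s u|%:R.

Definition best_response (d : T -> T -> R) (Z alpha : R) (s : profile) (u : T)
  (S : {set T}) : Prop :=
  u \notin S /\
  forall S' : {set T}, u \notin S' ->
    cost d Z alpha (upd s u S) u <= cost d Z alpha (upd s u S') u.

Definition nash_eq (d : T -> T -> R) (Z alpha : R) (s : profile) : Prop :=
  forall u, best_response d Z alpha s u (s u).

Definition br_step (d : T -> T -> R) (Z alpha : R) (s s' : profile) : Prop :=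
  exists u S, best_response d Z alpha s u S /\ s' = upd s u S.

Inductive br_reach (d : T -> T -> R) (Z alpha : R) : profile -> profile -> Prop :=
  | br_refl s : br_reach d Z alpha s s
  | br_cons s s' s'' : br_step d Z alpha s s' -> br_reach d Z alpha s' s'' ->
                       br_reach d Z alpha s s''.

End Game.

(* Main.v *)
Require Import Defs.
From mathcomp Require Import all_boot all_order all_algebra.
From mathcomp Require Import lra.
Import Order.TTheory GRing.Theory Num.Theory.
Local Open Scope ring_scope.

Lemma mem_all_seqs (T : finType) (p : seq T) : p \in all_seqs T (size p).
Proof.
elim: p => [|x p IH] /=; first by rewrite inE.
by apply: (allpairs_f (fun x p => x :: p)); rewrite ?mem_enum.
Qed.

Lemma mem_cand {T : finType} {p : seq T} : (size p < #|T|)%N -> p \in cand_seqs T.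
Proof.
move=> H; apply/flatten_mapP; exists (size p); first by rewrite mem_iota.
exact: mem_all_seqs.
Qed.

Lemma uniq_size {T : finType} {x : T} {p} : uniq (x :: p) -> (size p < #|T|)%N.
Proof.
move=> U; have := card_uniqP U => /= e.
have := max_card (mem (x :: p)); rewrite e /=. done.
Qed.

Section Tree.
Variables (R : realFieldType) (T : finType) (E : rel T) (w d : T -> T -> R).
Hypotheses (Esym : symmetric E) (Eirr : irreflexive E)
  (wpos : forall x y, E x y -> 0 < w x y)
  (Htree : is_tree E) (Hmet : is_tree_metric E w d).

Definition spb (x y : T) (p : seq T) := [&& path E x p, last x p == y & uniq (x :: p)].

Lemma spb_eq x y p q : spb x y p -> spb x y q -> p = q.
Proof.
case: (Htree x y) => p0 [_ U] /and3P[a /eqP b c] /and3P[a' /eqP b' c'].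
by rewrite -(U p (And3 a b c)) -(U q (And3 a' b' c')).
Qed.

Definition sp (x y : T) : seq T := head [::] [seq p <- cand_seqs T | spb x y p].

Lemma sp_spec x y : spb x y (sp x y).
Proof.
case: (Htree x y) => p0 [[a b c] _].
have H : spb x y p0 by rewrite /spb a b c eqxx.
have : p0 \in [seq p <- cand_seqs T | spb x y p].
  by rewrite mem_filter H mem_cand // (uniq_size c).
move=> Hin; rewrite /sp; case e: [seq p <- _ | _] => [|q l] /=.
  by rewrite e in Hin.
have : q \in [seq p <- cand_seqs T | spb x y p] by rewrite e inE eqxx.
by rewrite mem_filter => /andP[].
Qed.

Lemma sp_uniq {x y p} : spb x y p -> sp x y = p.
Proof. by move=> H; apply: spb_eq (sp_spec x y) H. Qed.

Opaque sp.

Lemma sp_self x : sp x x = [::].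
Proof. by apply: sp_uniq; rewrite /spb /= eqxx. Qed.

Lemma E_neq a b : E a b -> a != b.
Proof. by apply: contraTneq => ->; rewrite Eirr. Qed.

Lemma sp_edge a b : E a b -> sp a b = [:: b].
Proof.
move=> H; apply: sp_uniq; rewrite /spb /= H eqxx /= inE andbT.
exact: E_neq.
Qed.

Lemma spb_cons {a v b q} : spb a v (b :: q) -> spb b v q.
Proof. by rewrite /spb /= => /and3P[/andP[_ ->] -> /andP[_ ->]]. Qed.

Lemma sp_cons {a v b q} : sp a v = b :: q -> sp b v = q.
Proof. move=> e; apply: sp_uniq; apply: (@spb_cons a); rewrite -e; exact: sp_spec. Qed.

Definition hd x v := head x (sp x v).
Definition side a b := [set t | hd a t == b].

Lemma hd_pre {x y p z} : spb x y p -> z \in p -> hd x z = head x p.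
Proof.
move=> H Hz; move: H; case/splitPr: Hz => p1 p2 /and3P[Hp _ Hu].
have : spb x z (p1 ++ [:: z]).
  rewrite /spb; move: Hp; rewrite cat_path /= => /andP[Hp1 /andP[Hz _]].
  rewrite cat_path Hp1 /= Hz last_cat /= eqxx /=.
  by move: Hu; rewrite -(cat1s z p2) -cat_cons catA cat_uniq => /andP[].
move/sp_uniq; rewrite /hd => ->; by case: p1 {Hp Hu}.
Qed.

Lemma sp_flip {a b v} : E a b -> hd a v != b -> sp b v = a :: sp a v.
Proof.
move=> Eab Hh; apply: sp_uniq.
have /and3P[Hp /eqP Hl Hu] := sp_spec a v.
move: Hu => /= /andP[Ha Hu'].
rewrite /spb /= Esym Eab Hp Hl eqxx Ha Hu' !andbT in_cons negb_or.
rewrite eq_sym E_neq //=.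
apply/negP => Hb; move: Hh; have := hd_pre (sp_spec a v) Hb.
by rewrite /hd sp_edge //= => <-; rewrite eqxx.
Qed.

Lemma child {a b c t} : E a b -> E b c -> c != a -> hd b t = c -> hd a t = b /\ t != b.
Proof.
move=> Eab Ebc Hca Hh; split.
  rewrite /hd (@sp_flip b a t) //; first by rewrite Esym.
  by rewrite Hh.
apply/negP => /eqP et; move: Hh; rewrite et /hd sp_self /= => ebc.
by move: Ebc; rewrite ebc Eirr.
Qed.

Lemma side_lt {a b c} : E a b -> E b c -> c != a -> (#|side b c| < #|side a b|)%N.
Proof.
move=> Eab Ebc Hca.
have Hb : b \in side a b by rewrite inE /hd sp_edge.
rewrite (cardsD1 b (side a b)) Hb add1n ltnS; apply: subset_leq_card.
apply/subsetP => t; rewrite !inE => /eqP Ht.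
by have [-> ->] := child Eab Ebc Hca Ht; rewrite eqxx.
Qed.

Lemma cover u v : v != u -> E u (hd u v) /\ v \in side u (hd u v).
Proof.
move=> Hvu; split; last by rewrite inE.
have /and3P[Hp /eqP Hl _] := sp_spec u v.
move: Hp Hl; rewrite /hd; case: (sp u v) => [|b q] /=.
  by move=> _ e; move: Hvu; rewrite e eqxx.
by case/andP.
Qed.

Lemma d_sp x y : d x y = wlen w x (sp x y).
Proof. by have /and3P[a /eqP b c] := sp_spec x y; apply: Hmet. Qed.

Lemma d_self x : d x x = 0.
Proof. by rewrite d_sp sp_self. Qed.

Lemma d_edge a b : E a b -> d a b = w a b.
Proof. by move=> H; rewrite d_sp sp_edge //= addr0. Qed.

Lemma wlen_dw a p : path E a p -> wlen d a p = wlen w a p.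
Proof.
elim: p a => [|b p IH] a //= /andP[Hab Hp].
by rewrite d_edge // IH.
Qed.

Lemma wlen_ge0 a p : path E a p -> 0 <= wlen w a p.
Proof.
elim: p a => [|b p IH] a //= /andP[Hab Hp].
by rewrite addr_ge0 // ?IH // ltW // wpos.
Qed.

Lemma d_ge0 x y : 0 <= d x y.
Proof. by rewrite d_sp; apply: wlen_ge0; have /and3P[] := sp_spec x y. Qed.

Lemma d_pos x y : x != y -> 0 < d x y.
Proof.
move=> Hxy; rewrite d_sp.
have /and3P[Hp /eqP Hl _] := sp_spec x y.
move: Hp Hl; case: (sp x y) => [|b q] /=.
  by move=> _ e; move: Hxy; rewrite e eqxx.
move=> /andP[Hb Hq] _; rewrite ltr_wpDr ?wlen_ge0 //; exact: wpos.
Qed.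

Lemma d_step {a b v} : hd a v = b -> a != v -> d a v = w a b + d b v.
Proof.
move=> Hh Hav.
have /and3P[Hp /eqP Hl _] := sp_spec a v.
move: Hh Hp Hl; rewrite /hd d_sp; case e: (sp a v) => [|c q] /=.
  by move=> _ _ ea; move: Hav; rewrite ea eqxx.
move=> <- _ _; by rewrite d_sp (sp_cons e).
Qed.


Lemma d_edge_tri a b v : E a b -> d a v <= w a b + d b v.
Proof.
move=> Eab.
have wab := wpos _ _ Eab.
have Eba : E b a by rewrite Esym.
have wba := wpos _ _ Eba.
have [Hh|Hh] := eqVneq (hd b v) a.
  have Hbv : b != v.
    apply/negP => /eqP ebv; move: Hh; rewrite -ebv /hd sp_self /= => eba.
    by move: Eab; rewrite eba Eirr.
  rewrite (d_step Hh Hbv).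
  have := d_ge0 a v; lra.
by rewrite d_sp (sp_flip Eba Hh) /= -d_sp.
Qed.

Lemma walk a p : path E a p -> d a (last a p) <= wlen w a p.
Proof.
elim: p a => [|b p IH] a /=; first by rewrite d_self.
case/andP=> Eab Hp.
have := @d_edge_tri a b (last b p) Eab; have := IH b Hp; lra.
Qed.

Lemma wlen_cat (f : T -> T -> R) a p1 p2 :
  wlen f a (p1 ++ p2) = wlen f a p1 + wlen f (last a p1) p2.
Proof. elim: p1 a => [|b p IH] a /=; first by rewrite add0r. by rewrite IH addrA. Qed.

Lemma tri a b c : d a c <= d a b + d b c.
Proof.
have /and3P[H1 /eqP L1 _] := sp_spec a b.
have /and3P[H2 /eqP L2 _] := sp_spec b c.
have := @walk a (sp a b ++ sp b c).
rewrite cat_path H1 L1 H2 last_cat L1 L2 wlen_cat L1 -!d_sp => H; exact: H.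
Qed.

Lemma wlen_d_ge u p : d u (last u p) <= wlen d u p.
Proof.
elim: p u => [|b p IH] u /=; first by rewrite d_self.
have := tri u b (last b p); have := IH b; lra.
Qed.

Lemma far_aux v : forall q a b, E a b -> path E b q -> uniq (a :: b :: q) ->
  hd a v != b -> d a v <= d (last b q) v.
Proof.
elim=> [|c q IH] a b Eab Hp Hu Hh.
  have Eba : E b a by rewrite Esym.
  have Hs := sp_flip Eab Hh.
  rewrite /= [d b v]d_sp Hs /= -d_sp; have := wpos _ _ Eba; lra.
have Eba : E b a by rewrite Esym.
have Hs := sp_flip Eab Hh.
have Hba : d a v <= d b v by rewrite [d b v]d_sp Hs /= -d_sp; have := wpos _ _ Eba; lra.
move: Hp => /= /andP[Ebc Hq].
have Hca : a != c.
  by move: Hu; rewrite /= !inE !negb_or => /andP[/andP[_ /andP[]]].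
have Hhb : hd b v != c by rewrite /hd Hs.
have := IH b c Ebc Hq _ Hhb.
have Hu' : uniq (b :: c :: q) by move: Hu => /= /andP[_ ->].
move=> /(_ Hu'); lra.
Qed.

Lemma far u x v : hd u x != hd u v -> d u v <= d x v.
Proof.
have /and3P[Hp /eqP Hl Hu] := sp_spec u x.
move: Hp Hl Hu; rewrite /hd; case: (sp u x) => [|b q] /=.
  by move=> _ <- _ _; rewrite lexx.
move=> /andP[Eub Hq] <- Hu Hh.
by apply: far_aux; rewrite // eq_sym.
Qed.


Lemma path_good (s : profile T) k
  (HD : forall a b, E a b -> (#|side a b| <= k)%N -> b \in s a) v :
  forall q a b, spb a v (b :: q) -> (#|side a b| <= k)%N ->
    greedy d s a v (b :: q) && (wlen d a (b :: q) == d a v).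
Proof.
elim=> [|c q IH] a b Hs Hk.
  move: (Hs) => /and3P[/= /andP[Eab _] /eqP ebv _].
  rewrite /greedy /= HD // ebv eqxx /= d_self d_pos ?E_neq -?ebv //.
  by rewrite addr0 eqxx.
have Hs' := spb_cons Hs.
move: (Hs) => /and3P[/= /andP[Eab /andP[Ebc _]] _ Hu].
have Hca : c != a.
  by move: Hu; rewrite /= !inE !negb_or => /andP[/andP[_ /andP[H _]] _]; rewrite eq_sym.
have Hk' : (#|side b c| <= k)%N by exact: ltnW (leq_trans (side_lt Eab Ebc Hca) Hk).
have /andP[Hg /eqP Hw] := IH b c Hs' Hk'.
have Hd : d a v = w a b + d b v.
  by rewrite d_sp (sp_uniq Hs) /= [d b v]d_sp (sp_uniq Hs').
have wab := wpos _ _ Eab.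
have Hw' : d b c + wlen d c q = d b v by rewrite -Hw.
move: Hg; rewrite /greedy /= => /andP[/andP[Hbc Hpq] Hl].
rewrite HD // Hbc Hpq Hl /= Hw' (@d_edge a b Eab) Hd eqxx !andbT /=.
lra.
Qed.

Lemma ready_of (s : profile T) k
  (HD : forall a b, E a b -> (#|side a b| <= k)%N -> b \in s a) u y v :
  E u y -> (#|side u y| <= k.+1)%N -> v \in side u y ->
  exists q, greedy d s y v q && (wlen d y q == d y v).
Proof.
move=> Euy Hk; rewrite inE => /eqP Hh.
have [<-|Hyv] := eqVneq y v.
  by exists [::]; rewrite /greedy /= d_self !eqxx.
have /and3P[Hp _ Hu] := sp_spec u v.
move: Hh Hp Hu; rewrite /hd; case e: (sp u v) => [|c q] /=.
  by move=> euy; move: Euy; rewrite euy Eirr.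
move=> ecy; rewrite ecy in e *; move=> /andP[_ Hq] Hu.
have eq := sp_cons e.
have /and3P[Hp2 /eqP Hl2 _] := sp_spec y v.
move: Hp2 Hl2; rewrite eq; case: q e eq Hq Hu => [|b q'] e eq Hq Hu /=.
  by move=> _ eyv; move: Hyv; rewrite eyv eqxx.
move=> /andP[Eyb _] _.
have Hbu : b != u.
  by apply/negP => /eqP ebu; move: Hu; rewrite ebu !inE eqxx orbT.
have Hk' : (#|side y b| <= k)%N by rewrite -ltnS; apply: leq_trans (side_lt Euy Eyb Hbu) Hk.
have Hs : spb y v (b :: q') by rewrite -eq; apply: sp_spec.
exists (b :: q'); exact: path_good HD v q' y b Hs Hk'.
Qed.


Lemma greedy_ext (s1 s2 : profile T) v a :
  (forall b x, d b v <= d a v -> d x v < d b v -> (x \in s1 b) = (x \in s2 b)) ->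
  forall p, greedy d s1 a v p = greedy d s2 a v p.
Proof.
move=> H p; rewrite /greedy; congr (_ && _).
elim: p a H => [|x p IH] a H //=.
case: (ltrP (d x v) (d a v)) => Hx.
  rewrite (H a x (lexx _) Hx) (IH x) // => b y Hb Hy; apply: H => //.
  exact: le_trans Hb (ltW Hx).
by rewrite !andbF.
Qed.

Lemma greedy_lt (s : profile T) v : forall p a z,
  path (fun a b => (b \in s a) && (d b v < d a v)) a p -> z \in p -> d z v < d a v.
Proof.
elim=> [|x p IH] a z //= /andP[/andP[_ Hx] Hp]; rewrite inE => /orP[/eqP ->//|Hz].
exact: lt_trans (IH x z Hp Hz) Hx.
Qed.

Lemma greedy_uniq {s : profile T} {u v p} : greedy d s u v p -> uniq (u :: p).
Proof.
case/andP=> Hp _; elim: p u Hp => [|x p IH] u //= Hp.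
have Hp' := Hp; move: Hp' => /andP[/andP[_ Hx] Hp2].
apply/andP; split; last exact: IH x Hp2.
apply/negP => Hu.
by have := @greedy_lt s v (x :: p) u u Hp Hu; rewrite ltxx.
Qed.

Lemma greedy_cand {s : profile T} {u v p} : greedy d s u v p -> p \in cand_seqs T.
Proof. by move/greedy_uniq/uniq_size/mem_cand. Qed.

Lemma bigmin_mem (l0 : R) ls : \big[Num.min/l0]_(l <- ls) l \in l0 :: ls.
Proof.
elim: ls => [|a ls IH]; first by rewrite big_nil inE eqxx.
rewrite big_cons {1}/Order.min; case: ifP => _.
  by rewrite !inE eqxx orbT.
move: IH; rewrite !inE => /orP[->//|->]; by rewrite !orbT.
Qed.

Lemma bigmin_le (l0 : R) ls x : x \in l0 :: ls -> \big[Num.min/l0]_(l <- ls) l <= x.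
Proof.
elim: ls => [|a ls IH]; first by rewrite big_nil inE => /eqP ->.
rewrite big_cons ge_min !inE => /orP[Hx|/orP[/eqP ->|Hx]].
- by rewrite IH ?orbT // inE Hx.
- by rewrite lexx.
- by rewrite IH ?orbT // inE Hx orbT.
Qed.

Lemma stretch_ge1 (s : profile T) Z u v : u != v -> 1 <= Z -> 1 <= stretch d Z s u v.
Proof.
move=> Huv HZ; rewrite /stretch; case e: greedy_lengths => [|l0 ls] //.
have /mapP[p Hp ->] : \big[Num.min/l0]_(l <- ls) l \in greedy_lengths d s u v.
  by rewrite e; exact: bigmin_mem.
move: Hp; rewrite mem_filter => /andP[/andP[_ /eqP Hl] _].
rewrite ler_pdivlMr ?d_pos // mul1r -{1}Hl; exact: wlen_d_ge.
Qed.

Lemma stretch_gt1 (s : profile T) Z u v : u != v -> 1 < Z ->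
  (forall p, greedy d s u v p -> d u v < wlen d u p) -> 1 < stretch d Z s u v.
Proof.
move=> Huv HZ H; rewrite /stretch; case e: greedy_lengths => [|l0 ls] //.
have /mapP[p Hp ->] : \big[Num.min/l0]_(l <- ls) l \in greedy_lengths d s u v.
  by rewrite e; exact: bigmin_mem.
move: Hp; rewrite mem_filter => /andP[Hg _].
rewrite ltr_pdivlMr ?d_pos // mul1r; exact: H.
Qed.

Lemma stretch_eq1 (s : profile T) Z u v : u != v ->
  (exists p, greedy d s u v p && (wlen d u p == d u v)) -> stretch d Z s u v = 1.
Proof.
move=> Huv [p /andP[Hg /eqP Hw]].
have Hin : d u v \in greedy_lengths d s u v.
  by rewrite -Hw; apply: map_f; rewrite mem_filter Hg (greedy_cand Hg).
rewrite /stretch; case e: greedy_lengths Hin => [|l0 ls] //; rewrite -e => Hin.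
have /mapP[q Hq Hm] : \big[Num.min/l0]_(l <- ls) l \in greedy_lengths d s u v.
  by rewrite e; exact: bigmin_mem.
have H1 : \big[Num.min/l0]_(l <- ls) l <= d u v by apply: bigmin_le; rewrite -e.
have H2 : d u v <= \big[Num.min/l0]_(l <- ls) l.
  move: Hq; rewrite mem_filter Hm => /andP[/andP[_ /eqP Hl] _].
  rewrite -{1}Hl; exact: wlen_d_ge.
have -> : \big[Num.min/l0]_(l <- ls) l = d u v by apply/eqP; rewrite eq_le H1 H2.
by rewrite divff // gt_eqF // d_pos.
Qed.

Lemma stretch_Z (s : profile T) Z u v : (forall p, ~~ greedy d s u v p) -> stretch d Z s u v = Z.
Proof.
move=> H; rewrite /stretch /greedy_lengths.
have -> : [seq p <- cand_seqs T | greedy d s u v p] = [::].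
  apply/eqP; rewrite -[_ == _]negbK -has_filter; apply/hasPn => p _; exact: H.
by [].
Qed.

Lemma stretch_eq (s1 s2 : profile T) Z u v :
  (forall p, greedy d s1 u v p = greedy d s2 u v p) -> stretch d Z s1 u v = stretch d Z s2 u v.
Proof.
move=> H; rewrite /stretch /greedy_lengths.
have -> : [seq p <- cand_seqs T | greedy d s1 u v p] = [seq p <- cand_seqs T | greedy d s2 u v p].
  by apply: eq_filter.
by [].
Qed.


Lemma greedy_cons (s : profile T) u v y q :
  greedy d s u v (y :: q) = [&& y \in s u, d y v < d u v & greedy d s y v q].
Proof. by rewrite /greedy /= -!andbA. Qed.

Lemma upd_u (s : profile T) u S : upd s u S u = S.
Proof. by rewrite /upd eqxx. Qed.

Lemma upd_ne (s : profile T) u S b : b != u -> upd s u S b = s b.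
Proof. by rewrite /upd => /negbTE ->. Qed.

Lemma core (Z alpha : R) (Ha : 0 < alpha) (HZ : alpha + 2 <= Z) (s : profile T) u y
  (Euy : E u y)
  (Hready : forall v, v \in side u y -> exists q, greedy d s y v q && (wlen d y q == d y v))
  B (HB : best_response d Z alpha s u B) : B :&: side u y = [set y].
Proof.
case: HB => HuB HB.
set Ts := side u y.
have Hhy : hd u y = y by rewrite /hd sp_edge.
have HyT : y \in Ts by rewrite inE Hhy.
have Huy : u != y by apply: E_neq.
have HuT : u \notin Ts by rewrite inE /hd sp_self /=.
apply/eqP; apply: contraT => Hne.
set B' := y |: (B :\: Ts).
have HuB' : u \notin B' by rewrite !inE negb_or Huy /= negb_and HuB orbT.
have Hle := HB B' HuB'.
set f1 := fun v => stretch d Z (upd s u B) u v.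
set f2 := fun v => stretch d Z (upd s u B') u v.
have HA : forall v, v != u -> v \notin Ts -> f2 v = f1 v.
  move=> v Hvu HvT; rewrite /f1 /f2; apply: stretch_eq => p; apply: greedy_ext => b x Hb Hx.
  rewrite /upd; case: eqP => [eb|]//; rewrite eb in Hx.
  have HxT : x \notin Ts.
    apply/negP => HxT; have := @far u x v.
    rewrite inE in HxT; rewrite (eqP HxT).
    have -> : y != hd u v by rewrite eq_sym; move: HvT; rewrite inE.
    by move=> /(_ isT); rewrite leNgt Hx.
  rewrite /B' in_setU1 in_setD (negbTE HxT) /=.
  have -> : (x == y) = false by apply/negbTE; apply: contraNneq HxT => ->.
  by [].
have HB1 : forall v, v != u -> v \in Ts -> f2 v = 1.
  move=> v Hvu HvT; rewrite /f2.
  have [q /andP[Hq /eqP Hw]] := Hready v HvT.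
  have Hhv : hd u v = y by move: HvT; rewrite inE => /eqP.
  have Huv : u != v by rewrite eq_sym.
  have Hd := d_step Hhv Huv.
  have wuy := wpos _ _ Euy.
  have Hyv : d y v < d u v by rewrite Hd; lra.
  have Hg' : greedy d (upd s u B') y v q = greedy d s y v q.
    apply: greedy_ext => b x Hb _; rewrite /upd; case: eqP => [eb|//].
    by move: Hb; rewrite eb leNgt Hyv.
  apply: stretch_eq1; first by [].
  exists (y :: q); rewrite greedy_cons Hg' Hq upd_u !inE eqxx Hyv /=.
  by rewrite (@d_edge u y Euy) Hw Hd.
have HC : forall v, v != u -> 1 <= f1 v.
  move=> v Hvu; apply: stretch_ge1; [by rewrite eq_sym | lra].
have HD : forall p, greedy d (upd s u B) u y p -> exists x p', p = x :: p' /\ x \in B :&: Ts.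
  case=> [|x p'].
    by rewrite /greedy /= => /eqP e; move: Huy; rewrite e eqxx.
  rewrite greedy_cons upd_u => /and3P[HxB Hxy _]; exists x, p'; split => //.
  rewrite in_setI HxB /= inE; apply: contraTT Hxy => Hxh.
  rewrite -leNgt; apply: far; by rewrite Hhy.
have Hyu : y != u by rewrite eq_sym.
have Hrest : \sum_(v | (v != u) && (v != y)) stretch d Z (upd s u B') u v <=
             \sum_(v | (v != u) && (v != y)) stretch d Z (upd s u B) u v.
  apply: ler_sum => v /andP[Hvu _]; case: (boolP (v \in Ts)) => HvT.
    by have := HB1 v Hvu HvT; have := HC v Hvu; rewrite /f1 /f2 => ? ->.
  by have := HA v Hvu HvT; rewrite /f1 /f2 => ->.
have Hf2y : stretch d Z (upd s u B') u y = 1 by apply: HB1.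
have Hc' : #|B'| = (#|B :\: Ts| + 1)%N by rewrite cardsU1 in_setD HyT /= addnC.
have Hc : #|B| = (#|B :&: Ts| + #|B :\: Ts|)%N by rewrite cardsID.
move: Hle; rewrite /cost !upd_u (bigD1 y) // [in X in _ <= X](bigD1 y) //= Hc' Hc Hf2y.
move: Hrest.
set S1 := \sum_(v | (v != u) && (v != y)) stretch d Z (upd s u B) u v.
set S2 := \sum_(v | (v != u) && (v != y)) stretch d Z (upd s u B') u v.
set c := #|B :\: Ts|.
have Hc0 : 0 <= c%:R :> R by [].
case En: #|B :&: Ts| => [|[|n]].
- have H0 : B :&: Ts = set0 by apply/eqP; rewrite -cards_eq0 En.
  have -> : stretch d Z (upd s u B) u y = Z.
    apply: stretch_Z => p; apply/negP => Hp; have [x [p' [_ Hx]]] := HD p Hp.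
    by rewrite H0 inE in Hx.
  rewrite !natrD !mulrDr mulr1; set ac := alpha * c%:R; lra.
- have /cards1P [x Hx] : #|B :&: Ts| == 1%N by rewrite En.
  have Hxy : x != y by apply/eqP => exy; move: Hne; rewrite Hx exy eqxx.
  have HxT : x \in Ts.
    have : x \in B :&: Ts by rewrite Hx set11.
    by rewrite in_setI => /andP[].
  have Hgt : 1 < stretch d Z (upd s u B) u y.
    apply: stretch_gt1 => //; first lra.
    move=> p Hp; have [x' [p' [ep Hx']]] := HD p Hp.
    move: Hx'; rewrite Hx inE => /eqP ex; subst p x'.
    move: Hp; rewrite greedy_cons => /and3P[_ _ /andP[_ /eqP Hl]].
    have Hhx : hd u x = y by move: HxT; rewrite inE => /eqP.
    have Hux : u != x by apply/eqP => eux; move: HuT; rewrite eux HxT.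
    have Hd := d_step Hhx Hux.
    have := @wlen_d_ge x p'; rewrite Hl => Hw.
    have Hyx : 0 < d y x by apply: d_pos; rewrite eq_sym.
    have Hxy0 := d_ge0 x y.
    rewrite /= (@d_edge u y Euy) Hd; lra.
  rewrite !natrD !mulrDr mulr1; set ac := alpha * c%:R; lra.
- have HC1 := HC y Hyu; rewrite /f1 in HC1.
  have Hn : 0 <= n%:R :> R by [].
  have H2 : alpha * 2 <= alpha * (n.+2)%:R by rewrite ler_pM2l // ler_nat.
  move: H2; rewrite !natrD !mulrDr mulr1; set ac := alpha * c%:R; lra.
Qed.



Definition Dk k (s : profile T) := forall a b, E a b -> (#|side a b| <= k)%N ->
  s a :&: side a b = [set b].

Lemma HD_of k s : Dk k s -> forall a b, E a b -> (#|side a b| <= k)%N -> b \in s a.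
Proof.
move=> H a b Eab Hk; have := H a b Eab Hk => /setP /(_ b).
by rewrite in_setI set11 => /andP[].
Qed.

Lemma br_exists Z alpha (s : profile T) u : exists B, best_response d Z alpha s u B.
Proof.
have P0 : u \notin (set0 : {set T}) by rewrite inE.
case: (@arg_minP _ R {set T} set0 (fun S => u \notin S)
   (fun S => cost d Z alpha (upd s u S) u) P0) => B HB Hmin.
by exists B; split.
Qed.

Lemma br_trans Z alpha (s1 s2 s3 : profile T) :
  br_reach d Z alpha s1 s2 -> br_reach d Z alpha s2 s3 -> br_reach d Z alpha s1 s3.
Proof.
elim=> [//|a b c Hab _ IH] H; apply: br_cons Hab _; exact: IH.
Qed.

Lemma round Z alpha (Ha : 0 < alpha) (HZ : alpha + 2 <= Z) k : forall (l : seq T) (s : profile T),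
  valid_profile s -> Dk k s -> exists s', br_reach d Z alpha s s' /\ valid_profile s' /\
  Dk k s' /\ forall a b, a \in l -> E a b -> (#|side a b| <= k.+1)%N -> s' a :&: side a b = [set b].
Proof.
elim=> [|u l IH] s Hv HDk.
  by exists s; split; [exact: br_refl | split => //].
have [s1 [R1 [Hv1 [HD1 Hl1]]]] := IH s Hv HDk.
have [B HB] := br_exists Z alpha s1 u.
have Hcore : forall b, E u b -> (#|side u b| <= k.+1)%N -> B :&: side u b = [set b].
  move=> b Eub Hk; apply: (@core Z alpha Ha HZ s1 u b Eub _ B HB) => v Hv'.
  exact: (@ready_of s1 k (@HD_of k s1 HD1) u b v Eub Hk Hv').
exists (upd s1 u B); split.
  apply: br_trans R1 _; apply: br_cons (br_refl _ _ _ _); by exists u, B.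
split.
  move=> x; case: (eqVneq x u) => [->|hx]; first by rewrite upd_u; case: HB.
  by rewrite upd_ne //; apply: Hv1.
split.
  move=> a b Eab Hk; case: (eqVneq a u) => [ea|ha].
    by rewrite ea upd_u; apply: Hcore; rewrite -?ea //; apply: leqW.
  by rewrite upd_ne //; apply: HD1.
move=> a b; rewrite inE => Hal Eab Hk; case: (eqVneq a u) => [ea|ha].
  by rewrite ea upd_u; apply: Hcore; rewrite -?ea.
rewrite upd_ne //; apply: Hl1 => //; by move: Hal; rewrite (negbTE ha).
Qed.

Lemma rounds Z alpha (Ha : 0 < alpha) (HZ : alpha + 2 <= Z) (s0 : profile T) :
  valid_profile s0 -> forall k, exists s, br_reach d Z alpha s0 s /\ valid_profile s /\ Dk k s.
Proof.
move=> Hv0; elim=> [|k [s [R1 [Hv1 HD1]]]].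
  exists s0; split; first exact: br_refl.
  split => // a b Eab; rewrite leqn0 => /eqP /cards0_eq /setP /(_ b).
  by rewrite inE /hd sp_edge //= eqxx inE.
have [s' [R2 [Hv2 [_ Hl2]]]] := @round Z alpha Ha HZ k (enum T) s Hv1 HD1.
exists s'; split; first exact: br_trans R1 R2.
split => // a b Eab Hk; apply: Hl2 => //; by rewrite mem_enum.
Qed.

Lemma main_sec (alpha : R) : 0 < alpha ->
  exists Z0 : R, forall Z : R, Z0 <= Z ->
    forall s0 : profile T, valid_profile s0 ->
      exists s : profile T, br_reach d Z alpha s0 s /\ nash_eq d Z alpha s.
Proof.
move=> Ha; exists (alpha + 2) => Z HZ s0 Hv0.
have [s [R1 [Hv HD]]] := @rounds Z alpha Ha HZ s0 Hv0 #|T|.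
exists s; split => // u.
have [B HB] := br_exists Z alpha s u.
have Hk : forall b, (#|side u b| <= #|T|)%N by move=> b; apply: max_card.
have Hcore : forall b, E u b -> B :&: side u b = [set b].
  move=> b Eub; apply: (@core Z alpha Ha HZ s u b Eub _ B HB) => v Hv'.
  exact: (@ready_of s #|T| (@HD_of #|T| s HD) u b v Eub (leqW (Hk b)) Hv').
suff -> : s u = B by [].
apply/setP => v; case: (eqVneq v u) => [->|hv].
  by rewrite (negbTE (Hv u)); case: HB => /negbTE ->.
have [Eub Hvs] := @cover u v hv.
have e1 := HD u _ Eub (Hk _); have e2 := Hcore _ Eub.
have : (v \in s u :&: side u (hd u v)) = (v \in B :&: side u (hd u v)) by rewrite e1 e2.
by rewrite !in_setI Hvs !andbT.
Qed.

End Tree.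

Theorem theorem3p5 (R : realFieldType) (T : finType) (E : rel T)
  (w d : T -> T -> R) (alpha : R) :
  symmetric E -> irreflexive E ->
  (forall x y, E x y -> w x y = w y x) ->
  (forall x y, E x y -> 0 < w x y) ->
  is_tree E -> is_tree_metric E w d ->
  0 < alpha ->
  exists Z0 : R, forall Z : R, Z0 <= Z ->
    forall s0 : profile T, valid_profile s0 ->
      exists s : profile T, br_reach d Z alpha s0 s /\ nash_eq d Z alpha s.
Proof.
move=> Hs Hi _ Hp Ht Hm Ha.
eapply main_sec; eassumption.
Qed.
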